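(* Let $|q|\ne1$, $q\ne0$, $x\in\mathbb C^*$ with none of $x^{\pm1},x^{\pm2}$ an integer power of $q$, and $m\in\mathbb Z$. With $LA_m=A_{m+1}C_m-A_mC_{m+1}$ and $LB_m=B_{m+1}C_m-B_mC_{m+1}$ (all at $(x,q)$), $$C_m(x,q)=\frac1{x^{-1}-x}\big(A_m(x,q)LB_m(x,q)-B_m(x,q)LA_m(x,q)\big),$$ $$C_{m+1}(x,q)=\frac1{x^{-1}-x}\big(A_{m+1}(x,q)LB_m(x,q)-B_{m+1}(x,q)LA_m(x,q)\big).$$
   Context: Notation: $(a;q)_k=\prod_{j=0}^{k-1}(1-aq^j)$. For $|q|\ne1$: $C_m(x,q)=\sum_{k\ge0}(-1)^k\frac{q^{k(k+1)/2+km}}{(x^{-1};q)_{k+1}(x;q)_{k+1}}$, $A_m(x,q)=\sum_{k\ge0}(-1)^k\frac{q^{k(k+1)/2+km}x^{k+m}}{(q;q)_k(x^2q;q)_k}$, $B_m(x,q)=A_m(x^{-1},q)$. *)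

(* Defs.v *)
From HB Require Import structures.
From mathcomp Require Import all_boot all_order all_algebra.
From mathcomp Require Import complex.
From mathcomp Require Import all_classical all_reals all_analysis.
Set Implicit Arguments. Unset Strict Implicit. Unset Printing Implicit Defensive.
Import Order.TTheory GRing.Theory Num.Theory.
Import numFieldTopology.Exports numFieldNormedType.Exports.
Local Open Scope ring_scope.
Local Open Scope complex_scope.

HB.instance Definition _ (R : rcfType) := NormedModule.copy R[i] (R[i])^o.

Section QSeries.
Variable R : realType.
Notation C := R[i].

Definition qpoch (a q : C) (k : nat) : C := \prod_(j < k) (1 - a * q ^+ j).

Definition Cm (m : int) (x q : C) : C :=
  \big[+%R/0%R]_(0 <= k <oo)
    ((-1) ^+ k * q ^ (((k * k.+1)./2)%:Z + k%:Z * m)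
       / (qpoch x^-1 q k.+1 * qpoch x q k.+1)).

Definition Am (m : int) (x q : C) : C :=
  \big[+%R/0%R]_(0 <= k <oo)
    ((-1) ^+ k * q ^ (((k * k.+1)./2)%:Z + k%:Z * m) * x ^ (k%:Z + m)
       / (qpoch q q k * qpoch (x ^+ 2 * q) q k)).

Definition Bm (m : int) (x q : C) : C := Am m x^-1 q.

Definition LAm (m : int) (x q : C) : C :=
  Am (m + 1) x q * Cm m x q - Am m x q * Cm (m + 1) x q.
Definition LBm (m : int) (x q : C) : C :=
  Bm (m + 1) x q * Cm m x q - Bm m x q * Cm (m + 1) x q.

End QSeries.

(* Main.v *)
Require Import Defs.
From HB Require Import structures.
From mathcomp Require Import all_boot all_order all_algebra.
From mathcomp Require Import complex.
From mathcomp Require Import all_classical all_reals all_analysis.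
From mathcomp Require Import ring lra.
Import Order.TTheory GRing.Theory Num.Theory.
Import numFieldTopology.Exports numFieldNormedType.Exports.
Local Open Scope classical_set_scope.
Local Open Scope ring_scope.
Set Implicit Arguments. Unset Strict Implicit.
Section Cplx.
Variable R : realType.
Local Notation C := R[i].
Local Open Scope complex_scope.

Definition nc (z : C) : R := complex.Re `|z|.

Lemma ncE z : `|z| = (nc z)%:C.
Proof. by rewrite /nc normc_def. Qed.

Lemma nc_ge0 z : 0 <= nc z.
Proof. by rewrite -ler0c -ncE. Qed.

Lemma ncM z w : nc (z * w) = nc z * nc w.
Proof. by apply: (@complexI R); rewrite rmorphM /= -!ncE normrM. Qed.

Lemma ncD z w : nc (z + w) <= nc z + nc w.
Proof. by rewrite -lecR rmorphD /= -!ncE ler_normD. Qed.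

Lemma ncN z : nc (- z) = nc z.
Proof. by rewrite /nc normrN. Qed.

Lemma ncB z w : nc (z - w) = nc (w - z).
Proof. by rewrite /nc distrC. Qed.

Lemma ncV z : nc z^-1 = (nc z)^-1.
Proof. by apply: (@complexI R); rewrite fmorphV /= -!ncE normfV. Qed.

Lemma ncX z n : nc (z ^+ n) = nc z ^+ n.
Proof. by apply: (@complexI R); rewrite rmorphXn /= -!ncE normrX. Qed.

Lemma nc_real r : nc r%:C = `|r|.
Proof. by rewrite /nc normc_def /= expr0n addr0 sqrtr_sqr. Qed.

Lemma nc1 : nc 1 = 1.
Proof. by rewrite /nc normr1. Qed.

Lemma nc_eq0 z : (nc z == 0) = (z == 0).
Proof. by rewrite -(inj_eq (@complexI _)) -ncE normr_eq0. Qed.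

Lemma nc_Re z : `|complex.Re z| <= nc z.
Proof. by rewrite -lecR -ncE normc_ge_Re. Qed.

Lemma nc_Im z : `|complex.Im z| <= nc z.
Proof.
case: z => a b; rewrite /nc normc_def /=.
by rewrite -sqrtr_sqr ler_wsqrtr // lerDr sqr_ge0.
Qed.

Lemma nc_ReIm z : nc z <= `|complex.Re z| + `|complex.Im z|.
Proof.
rewrite {1}[z]complexE; apply: le_trans (ncD _ _) _.
by rewrite ncM nc_real nc_real /nc normc_def /= expr0n expr1n add0r sqrtr1 mul1r.
Qed.

Lemma real_pos (e : C) : 0 < e -> e = (complex.Re e)%:C /\ 0 < complex.Re e.
Proof.
case: e => a b; rewrite ltcE /= => /andP[/eqP -> ha]; by split.
Qed.

Lemma cvgC_of (u : nat -> C) l :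
  (forall eps : R, 0 < eps -> \forall n \near \oo, nc (l - u n) < eps) ->
  u @ \oo --> l.
Proof.
move=> H; apply/cvgrPdist_lt => e /real_pos [-> he].
by apply: filterS (H _ he) => n hn; rewrite ncE ltcR.
Qed.

Lemma ofcvgC (u : nat -> C) l : u @ \oo --> l ->
  forall eps : R, 0 < eps -> \forall n \near \oo, nc (l - u n) < eps.
Proof.
move=> /cvgrPdist_lt H eps he.
have : (0 : C) < eps%:C by rewrite ltcR.
by move=> /H; apply: filterS => n; rewrite ncE ltcR.
Qed.

Lemma cvgReIm (u : nat -> C) (a b : R) :
  (fun n => complex.Re (u n)) @ \oo --> a ->
  (fun n => complex.Im (u n)) @ \oo --> b ->
  u @ \oo --> a +i* b.
Proof.
move=> /cvgrPdist_lt Ha /cvgrPdist_lt Hb; apply: cvgC_of => eps he.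
have he2 : 0 < eps / 2 by rewrite divr_gt0.
near=> n.
apply: le_lt_trans (nc_ReIm _) _.
have -> : complex.Re (a +i* b - u n) = a - complex.Re (u n) by case: (u n).
have -> : complex.Im (a +i* b - u n) = b - complex.Im (u n) by case: (u n).
rewrite [eps](splitr eps); apply: ltrD.
  by near: n; apply: Ha.
by near: n; apply: Hb.
Unshelve. all: by end_near. Qed.

Lemma nc_lim_le (u : nat -> C) l c (B : R) : u @ \oo --> l ->
  (forall n, nc (u n - c) <= B) -> nc (l - c) <= B.
Proof.
move=> /ofcvgC H hB; rewrite leNgt; apply/negP => hlt.
have he : 0 < nc (l - c) - B by rewrite subr_gt0.
have [N _ HN] := H _ he.
have h1 := HN N (leqnn N).
have h2 := ncD (l - u N) (u N - c); rewrite addrA subrK in h2.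
have h3 := hB N.
have := le_lt_trans h2 (ltr_leD h1 h3).
by rewrite subrK ltxx.
Qed.

Lemma ReD (a b : C) : complex.Re (a + b) = complex.Re a + complex.Re b.
Proof. by case: a; case: b. Qed.
Lemma ImD (a b : C) : complex.Im (a + b) = complex.Im a + complex.Im b.
Proof. by case: a; case: b. Qed.

Lemma Re_series (u : nat -> C) n :
  complex.Re (series u n) = series (fun k => complex.Re (u k)) n.
Proof.
elim: n => [|n IH]; first by rewrite /series /= !big_geq.
by rewrite !seriesSr ReD IH.
Qed.

Lemma Im_series (u : nat -> C) n :
  complex.Im (series u n) = series (fun k => complex.Im (u k)) n.
Proof.
elim: n => [|n IH]; first by rewrite /series /= !big_geq.
by rewrite !seriesSr ImD IH.
Qed.

Lemma real_series_cvg (v : nat -> R) (g : nat -> R) :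
  (forall k, `|v k| <= g k) -> cvgn (series g) -> cvgn (series v).
Proof.
move=> hv hg.
apply: (@normed_cvg R R^o).
apply: (series_le_cvg _ _ hv hg) => k //.
exact: le_trans (hv k).
Qed.

Lemma series_cvgC (u : nat -> C) (g : nat -> R) :
  (forall k, nc (u k) <= g k) -> cvgn (series g) -> cvgn (series u).
Proof.
move=> hu hg.
have cRe : cvgn (series (fun k => complex.Re (u k))).
  apply: (@real_series_cvg _ g) => // k; exact: le_trans (nc_Re _) (hu k).
have cIm : cvgn (series (fun k => complex.Im (u k))).
  apply: (@real_series_cvg _ g) => // k; exact: le_trans (nc_Im _) (hu k).
apply/cvg_ex; eexists; apply: cvgReIm.
  under eq_fun do rewrite Re_series; exact: cRe.
under eq_fun do rewrite Im_series; exact: cIm.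
Qed.

Lemma ratio_test (b : nat -> R) : (forall k, 0 <= b k) ->
  (exists K, forall k, (K <= k)%N -> b k.+1 <= b k / 2) -> cvgn (series b).
Proof.
move=> b0 [K HK].
have Hg : forall j, b (j + K)%N <= geometric (b K) 2^-1 j.
  elim=> [|j IH]; first by rewrite /= add0n expr0 mulr1.
  rewrite addSn /= exprS mulrCA (mulrC 2^-1).
  apply: le_trans (HK _ (leq_addl _ _)) _.
  by rewrite ler_pM2r ?invr_gt0.
have cs : cvgn (series (fun j => b (j + K)%N)).
  apply: (series_le_cvg _ _ Hg) => // [j|].
    by rewrite /= mulr_ge0 ?exprn_ge0 ?invr_ge0.
  by apply: is_cvg_geometric_series; rewrite gtr0_norm ?invr_gt0 // invf_lt1 // ltr1n.
apply/cvg_ex; exists (series b K + limn (series (fun j => b (j + K)%N))).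
rewrite -(cvg_shiftn K).
have -> : [sequence series b (n + K)%N]_n =
          (fun n => series b K + series (fun j => b (j + K)%N) n).
  apply/funext => n /=; rewrite series_addn; congr (_ + _).
  by rewrite -{1}[K]add0n big_addn addnK.
by apply: cvgD; [exact: cvg_cst | exact: cs].
Qed.

Lemma nc_1B_ge (w : C) : 1 - nc w <= nc (1 - w).
Proof.
have := ncD (1 - w) w; rewrite subrK nc1 => h.
by rewrite lerBlDr.
Qed.

Lemma nc_1B_ge' (w : C) : nc w - 1 <= nc (1 - w).
Proof.
have := ncD (w - 1) 1; rewrite subrK nc1 ncB => h.
by rewrite lerBlDr.
Qed.

Lemma eventually_small (Q : R) (eps : R) : 0 <= Q < 1 -> 0 < eps ->
  exists K, forall k, (K <= k)%N -> Q ^+ k < eps.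
Proof.
move=> /andP[Q0 Q1] he.
have := @cvg_expr R Q; rewrite ger0_norm // => /(_ Q1) /cvgrPdist_lt /(_ _ he).
move=> [N _ HN]; exists N => k /HN.
by rewrite sub0r normrN ger0_norm // exprn_ge0.
Qed.

Lemma real_bound (Q Y Z : R) : 0 <= Q -> Q != 1 -> 0 < Y -> 0 <= Z ->
 exists K, forall k, (K <= k)%N -> forall D1 D2 : R,
   1 - Q ^+ k.+1 <= D1 -> Q ^+ k.+1 - 1 <= D1 ->
   1 - Y ^+ 2 * Q ^+ k.+1 <= D2 -> Y ^+ 2 * Q ^+ k.+1 - 1 <= D2 ->
   [/\ 0 < D1, 0 < D2 & 2 * (Q ^+ k.+1 * Y * Z) <= D1 * D2].
Proof.
move=> Q0 Q1 Y0 Z0.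
have YZ0 : 0 <= Y * Z by rewrite mulr_ge0 // ltW.
have Y2 : 0 <= Y ^+ 2 by rewrite sqr_ge0.
case: (ltgtP Q 1) Q1 => // hQ _.
- set E := 2 + 2 * Y ^+ 2 + 8 * (Y * Z).
  have E0 : 0 < E by rewrite /E; lra.
  have hQ' : 0 <= Q < 1 by rewrite Q0 hQ.
  have Ei : 0 < E^-1 by rewrite invr_gt0.
  have [K HK] := eventually_small hQ' Ei.
  exists K => k hk D1 D2 h1 _ h3 _.
  have := HK k.+1 (leqW hk).
  set t := Q ^+ k.+1 => htE.
  rewrite -/t in h1 h3.
  have t0 : 0 <= t by rewrite exprn_ge0.
  have {}htE : t * E < 1 by rewrite -ltr_pdivlMr // div1r.
  have e : t * E = t * 2 + 2 * (Y ^+ 2 * t) + 8 * (t * Y * Z) by rewrite /E; ring.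
  have u0 : 0 <= Y ^+ 2 * t by rewrite mulr_ge0.
  have w0 : 0 <= t * Y * Z by rewrite -mulrA mulr_ge0.
  have hD1 : 1 / 2 <= D1 by lra.
  have hD2 : 1 / 2 <= D2 by lra.
  have := ler_pM (ltW _) (ltW _) hD1 hD2.
  rewrite !divr_gt0 // => /(_ isT isT) hp.
  split; [lra | lra | lra].
- set Qi := Q^-1.
  have Qp : 0 < Q by lra.
  have hQ' : 0 <= Qi < 1 by rewrite /Qi invr_ge0 Q0 /= invf_lt1.
  set E := 2 + 2 / Y ^+ 2 + 8 * (Z / Y).
  have a0 : 0 <= 2 / Y ^+ 2 by rewrite divr_ge0.
  have b0 : 0 <= Z / Y by rewrite divr_ge0 // ltW.
  have E0 : 0 < E by rewrite /E; lra.
  have Ei : 0 < E^-1 by rewrite invr_gt0.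
  have [K HK] := eventually_small hQ' Ei.
  exists K => k hk D1 D2 _ h2 _ h4.
  have := HK k.+1 (leqW hk).
  rewrite /Qi exprVn.
  set t := Q ^+ k.+1 => htE.
  rewrite -/t in h2 h4.
  have t0 : 0 < t by rewrite exprn_gt0.
  have {}htE : E < t by rewrite -ltf_pV2 ?posrE.
  have ht2 : 2 < t by rewrite /E in htE; lra.
  have hu : 2 < t * Y ^+ 2.
    by rewrite -ltr_pdivrMr ?exprn_gt0 //; rewrite /E in htE; lra.
  have hw : 8 * Z <= t * Y.
    by rewrite -ler_pdivrMr // -mulrA; rewrite /E in htE; lra.
  have p1 : t * (Y ^+ 2 * t) <= (2 * D1) * (2 * D2).
    apply: ler_pM; first (by rewrite ltW); first (by rewrite mulr_ge0 // ltW).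
      lra.
    lra.
  have p2 : (t * Y) * (8 * Z) <= (t * Y) * (t * Y).
    by rewrite ler_wpM2l // mulr_ge0 // ltW.
  have e1 : t * (Y ^+ 2 * t) = (t * Y) * (t * Y) by ring.
  have e2 : (2 * D1) * (2 * D2) = 4 * (D1 * D2) by ring.
  have e3 : (t * Y) * (8 * Z) = 8 * (t * Y * Z) by ring.
  split; [lra | lra | lra].
Qed.

End Cplx.

Lemma fid (F : fieldType) (A T y P1 P2 a b : F) k :
  (-1)^+k.+1 * (A * T) * y^+k.+1 * (P1^-1/a * (P2^-1/b)) =
  (-1)^+k * A * y^+k * (P1^-1/P2) * -(T*y) * (a^-1/b).
Proof. rewrite !exprS. ring. Qed.

Lemma fid2 (F : fieldType) (a y q qN z zN : F) : (1 - q*qN) != 0 -> (1 - y^+2*(q*qN)) != 0 ->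
 a * -((q*qN)*y) * ((1-q*qN)^-1 * (1-y^+2*(q*qN))^-1) * (z*zN)
 - (1+y^+2)*(a * -((q*qN)*y) * ((1-q*qN)^-1 * (1-y^+2*(q*qN))^-1) * ((q*qN)*(z*zN)))
 + y^+2*(a * -((q*qN)*y) * ((1-q*qN)^-1 * (1-y^+2*(q*qN))^-1) * ((q*qN)^+2*(z*zN)))
 + q*y*z*(a*(qN*zN)) = 0.
Proof. move=> h1 h2. field. by rewrite h1 h2. Qed.



Lemma fid0 (F : comRingType) (A y D : F) : A - (1 + y ^+ 2) * A + y ^+ 2 * A + D * 0 = 0.
Proof. ring. Qed.

Lemma fid4 (F : comRingType) (A1 a1 c B0 b0 b1 y2 C1 c1 D : F) :
  A1 - c*(B0+b0) + y2*C1 + D*B0 = 0 -> a1 - c*b1 + y2*c1 + D*b0 = 0 ->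
  A1 + a1 - c*((B0+b0)+b1) + y2*(C1+c1) + D*(B0+b0) = 0.
Proof.
move=> h1 h2.
have -> : A1 + a1 - c*((B0+b0)+b1) + y2*(C1+c1) + D*(B0+b0) =
  (A1 - c*(B0+b0) + y2*C1 + D*B0) + (a1 - c*b1 + y2*c1 + D*b0) by ring.
by rewrite h1 h2 addr0.
Qed.

Lemma const_lim (R : realType) (c L : R[i]) : (fun _ : nat => c) @ \oo --> L -> L = c.
Proof.
move=> H; apply/eqP; rewrite -subr_eq0 -nc_eq0 eq_le nc_ge0 andbT.
by apply: (nc_lim_le H) => n; rewrite subrr /nc normr0.
Qed.

Lemma nc_series (R : realType) (f : nat -> R[i]) N :
  nc (series f N) <= series (fun k => nc (f k)) N.
Proof.
elim: N => [|N IH]; first by rewrite /series /= !big_geq // /nc normr0.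
rewrite !seriesSr; apply: le_trans (ncD _ _) _; exact: lerD.
Qed.

Lemma series_le_lim (R : realType) (b : nat -> R) N : (forall k, 0 <= b k) ->
  cvgn (series b) -> series b N <= limn (series b).
Proof.
move=> b0 cb; apply: nondecreasing_cvgn_le => //.
exact: nondecreasing_series.
Qed.

Lemma series_shift_cvg (R : realType) (b : nat -> R) :
  cvgn (series b) -> cvgn (series (fun k => b k.+1)).
Proof.
move=> cb; apply/cvg_ex; exists (limn (series b) - b 0%N).
have -> : series (fun k => b k.+1) = (fun n => series b n.+1 - b 0%N).
  apply/funext => n; rewrite /series /= big_nat_recl //.
  by rewrite addrC addKr.
apply: cvgB; last exact: cvg_cst.
by rewrite (cvg_shiftS (series b)).
Qed.

Section Coef.
Variable R : realType.
Local Notation C := R[i].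
Local Open Scope complex_scope.
Variables (q y : C).

Definition tri k := ((k * k.+1)./2)%N.
Definition acoef k : C :=
  (-1) ^+ k * q ^+ (tri k) * y ^+ k / (qpoch q q k * qpoch (y ^+ 2 * q) q k).

Lemma triS k : tri k.+1 = (tri k + k.+1)%N.
Proof.
rewrite /tri.
have -> : (k.+1 * k.+2 = k * k.+1 + (k.+1).*2)%N by rewrite -mul2n; ring.
by rewrite halfD odd_double andbF add0n doubleK.
Qed.

Lemma qpochS a k : qpoch a q k.+1 = qpoch a q k * (1 - a * q ^+ k).
Proof. by rewrite /qpoch big_ord_recr. Qed.

Lemma acoefS k : acoef k.+1 =
  acoef k * (- (q ^+ k.+1 * y)) * ((1 - q ^+ k.+1)^-1 * (1 - y ^+ 2 * q ^+ k.+1)^-1).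
Proof.
rewrite /acoef triS !qpochS exprD !invfM.
rewrite -(exprS q k) -(mulrA (y ^+ 2) q) -(exprS q k).
exact: fid.
Qed.

Lemma acoef_ncS k : nc (acoef k.+1) = nc (acoef k) * (nc q ^+ k.+1 * nc y) *
  ((nc (1 - q ^+ k.+1))^-1 * (nc (1 - y ^+ 2 * q ^+ k.+1))^-1).
Proof. by rewrite acoefS ncM (ncM (acoef k)) ncN ncM ncX [nc (_^-1 / _)]ncM !ncV. Qed.

Lemma acoef_cvg z : nc q != 1 -> y != 0 ->
  cvgn (series (fun k => nc (acoef k) * nc z ^+ k)).
Proof.
move=> q1 y0.
have Y0 : 0 < nc y by rewrite lt0r nc_eq0 y0 nc_ge0.
have [K HK] := real_bound (nc_ge0 q) q1 Y0 (nc_ge0 z).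
apply: ratio_test => [k|]; first by rewrite mulr_ge0 ?exprn_ge0 ?nc_ge0.
exists K => k hk.
have e1 : nc (q ^+ k.+1) = nc q ^+ k.+1 by rewrite ncX.
have e2 : nc (y ^+ 2 * q ^+ k.+1) = nc y ^+ 2 * nc q ^+ k.+1 by rewrite ncM !ncX.
have h1 := nc_1B_ge (q ^+ k.+1); have h2 := nc_1B_ge' (q ^+ k.+1).
have h3 := nc_1B_ge (y ^+ 2 * q ^+ k.+1); have h4 := nc_1B_ge' (y ^+ 2 * q ^+ k.+1).
rewrite e1 in h1 h2; rewrite e2 in h3 h4.
have [D10 D20 hb] := HK k hk _ _ h1 h2 h3 h4.
rewrite acoef_ncS (exprSr (nc z)).
move: D10 D20 hb.
set a := nc (acoef k); set t := nc q ^+ k.+1; set Y := nc y; set Zk := nc z ^+ k.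
set Z := nc z; set D1 := nc (1 - q ^+ k.+1); set D2 := nc (1 - y ^+ 2 * q ^+ k.+1).
move=> D10 D20 hb.
have aZ : 0 <= a * Zk by rewrite mulr_ge0 ?exprn_ge0 ?nc_ge0.
have -> : a * (t * Y) * (D1^-1 * D2^-1) * (Zk * Z) = (a * Zk) * ((t * Y * Z) / (D1 * D2)).
  by rewrite invfM; ring.
have -> : a * Zk / 2 = (a * Zk) * (1 / 2) by ring.
apply: ler_wpM2l => //.
rewrite ler_pdivrMr ?mulr_gt0 //; lra.
Qed.

Definition Fc z := limn (series (fun k => acoef k * z ^+ k)).

Lemma Fc_cvg z : nc q != 1 -> y != 0 ->
  series (fun k => acoef k * z ^+ k) @ \oo --> Fc z.
Proof.
move=> q1 y0; apply: (@series_cvgC _ _ (fun k => nc (acoef k) * nc z ^+ k)).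
  by move=> k; rewrite ncM ncX.
exact: acoef_cvg.
Qed.

Lemma term_id N z : 1 - q ^+ N.+1 != 0 -> 1 - y ^+ 2 * q ^+ N.+1 != 0 ->
  acoef N.+1 * z ^+ N.+1 - (1 + y ^+ 2) * (acoef N.+1 * (q * z) ^+ N.+1)
  + y ^+ 2 * (acoef N.+1 * (q ^+ 2 * z) ^+ N.+1) + q * y * z * (acoef N * (q * z) ^+ N) = 0.
Proof.
rewrite !exprMn acoefS (exprS q N) (exprS z N) -(expr2 (q * q ^+ N)) => h1 h2.
exact: fid2.
Qed.

Lemma partial_id z N : (forall n, 1 - q ^+ n.+1 != 0) ->
  (forall n, 1 - y ^+ 2 * q ^+ n.+1 != 0) ->
  series (fun k => acoef k * z ^+ k) N.+1
  - (1 + y ^+ 2) * series (fun k => acoef k * (q * z) ^+ k) N.+1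
  + y ^+ 2 * series (fun k => acoef k * (q ^+ 2 * z) ^+ k) N.+1
  + q * y * z * series (fun k => acoef k * (q * z) ^+ k) N = 0.
Proof.
move=> hq hy; elim: N => [|N IH].
  rewrite /series /= big_nat1 !big_nat1 big_geq // !expr0 !mulr1.
  exact: fid0.
rewrite (seriesSr _ N.+1) (seriesSr (fun k => acoef k * (q ^+ 2 * z) ^+ k) N.+1).
rewrite !(seriesSr (fun k => acoef k * (q * z) ^+ k) N.+1) !(seriesSr (fun k => acoef k * (q * z) ^+ k) N) /=.
rewrite (seriesSr (fun k => acoef k * (q * z) ^+ k) N) /= in IH.
apply: fid4 IH _.
exact: term_id.
Qed.

Lemma Frec z : nc q != 1 -> y != 0 -> (forall n, 1 - q ^+ n.+1 != 0) ->
  (forall n, 1 - y ^+ 2 * q ^+ n.+1 != 0) ->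
  Fc z - (1 + y ^+ 2) * Fc (q * z) + y ^+ 2 * Fc (q ^+ 2 * z) + q * y * z * Fc (q * z) = 0.
Proof.
move=> q1 y0 hq hy.
have cv w : series (fun k => acoef k * w ^+ k) @ \oo --> Fc w by exact: Fc_cvg.
have cvS w : (fun N => series (fun k => acoef k * w ^+ k) N.+1) @ \oo --> Fc w.
  by rewrite (cvg_shiftS (series (fun k => acoef k * w ^+ k))).
apply: const_lim.
have <- : (fun N => series (fun k => acoef k * z ^+ k) N.+1
  - (1 + y ^+ 2) * series (fun k => acoef k * (q * z) ^+ k) N.+1
  + y ^+ 2 * series (fun k => acoef k * (q ^+ 2 * z) ^+ k) N.+1
  + q * y * z * series (fun k => acoef k * (q * z) ^+ k) N) = (fun _ => 0).
  by apply/funext => N; apply: partial_id.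
apply: cvgD; last exact: cvgMl_tmp.
apply: cvgD; last exact: cvgMl_tmp.
apply: cvgB => //; exact: cvgMl_tmp.
Qed.

Lemma acoef0 : acoef 0 = 1.
Proof. by rewrite /acoef /qpoch /tri !big_ord0 /= !expr0 !mul1r invr1. Qed.

Lemma Fc_near0 : nc q != 1 -> y != 0 ->
  exists K : R, forall z, nc z <= 1 -> nc (Fc z - 1) <= K * nc z.
Proof.
move=> q1 y0.
set b := fun k => nc (acoef k.+1).
have b0 k : 0 <= b k by exact: nc_ge0.
have cb : cvgn (series b).
  apply: (series_shift_cvg (b := fun k => nc (acoef k))).
  have := acoef_cvg (z:=1) q1 y0.
  rewrite (_ : (fun k => nc (acoef k) * nc (1 : R[i]) ^+ k) = fun k => nc (acoef k)) //.
  by apply/funext => k; rewrite nc1 expr1n mulr1.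
exists (limn (series b)) => z hz.
have H := Fc_cvg (z:=z) q1 y0; rewrite -cvg_shiftS in H.
apply: (nc_lim_le H) => N /=.
rewrite /series /= big_nat_recl // expr0 acoef0 mulr1 addrC addKr.
apply: le_trans (nc_series (fun k => acoef k.+1 * z ^+ k.+1) N) _.
apply: (@le_trans _ _ (nc z * series b N)).
  rewrite /series /= mulr_sumr; apply: ler_sum => k _.
  rewrite ncM ncX exprS mulrCA ler_wpM2l ?nc_ge0 //.
  rewrite -[X in _ <= X]mulr1 ler_wpM2l ?nc_ge0 //.
  by rewrite exprn_ile1 ?nc_ge0.
by rewrite mulrC ler_wpM2r ?nc_ge0 // series_le_lim.
Qed.

End Coef.

Lemma fid5 (F : comRingType) (s Qt Qm Xk Xm D : F) (k : nat) :
  s * (Qt * Qm ^+ k) * (Xk * Xm) * D = Xm * (s * Qt * Xk * D * Qm ^+ k).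
Proof. ring. Qed.

Lemma lim_of (R : realType) (u : nat -> R[i]) L : u @ \oo --> L -> limn u = L.
Proof. by move=> h; apply: (cvg_lim (@norm_hausdorff _ _) h). Qed.

Lemma fidW (F : fieldType) (X x F0 F1 G0 G1 : F) : X != 0 -> x != 0 ->
  X * F0 * ((X^-1 * x^-1) * G1) - (X * x) * F1 * (X^-1 * G0) =
  x^-1 * F0 * G1 - x * F1 * G0.
Proof. move=> h1 h2; field. by rewrite h1 h2. Qed.

Lemma fidC (F : fieldType) (x q z F0 F1 F2 G0 G1 G2 : F) : x != 0 ->
  F0 - (1 + x ^+ 2) * F1 + x ^+ 2 * F2 + q * x * z * F1 = 0 ->
  G0 - (1 + x^-1 ^+ 2) * G1 + x^-1 ^+ 2 * G2 + q * x^-1 * z * G1 = 0 ->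
  x^-1 * F1 * G2 - x * F2 * G1 = x^-1 * F0 * G1 - x * F1 * G0.
Proof.
move=> x0 hF hG.
have eF : F0 = (1 + x ^+ 2) * F1 - x ^+ 2 * F2 - q * x * z * F1.
  by rewrite -(subr0 F0) -hF; ring.
have eG : G0 = (1 + x^-1 ^+ 2) * G1 - x^-1 ^+ 2 * G2 - q * x^-1 * z * G1.
  by rewrite -(subr0 G0) -hG; ring.
rewrite eF eG; field; by rewrite x0.
Qed.

Lemma fidF (F : fieldType) (a a' b b' c c' d : F) : d != 0 -> a * b' - a' * b = d ->
  c = d^-1 * (a * (b' * c - b * c') - b * (a' * c - a * c')) /\
  c' = d^-1 * (a' * (b' * c - b * c') - b' * (a' * c - a * c')).
Proof.
move=> d0 hd.
have -> : a * (b' * c - b * c') - b * (a' * c - a * c') = c * (a * b' - a' * b) by ring.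
have -> : a' * (b' * c - b * c') - b' * (a' * c - a * c') = c' * (a * b' - a' * b) by ring.
rewrite hd; split; field; exact: d0.
Qed.

Section Main.
Variable R : realType.
Local Notation C := R[i].

Lemma Am_eq (q x : C) m : q != 0 -> x != 0 -> nc q != 1 ->
  Am m x q = x ^ m * Fc q x (q ^ m).
Proof.
move=> q0 x0 q1.
rewrite /Am.
have -> : (fun n => \big[+%R/0%R]_(0 <= k < n)
    ((-1) ^+ k * q ^ (((k * k.+1)./2)%:Z + k%:Z * m) * x ^ (k%:Z + m)
       / (qpoch q q k * qpoch (x ^+ 2 * q) q k))) =
   (fun n => x ^ m * series (fun k => acoef q x k * (q ^ m) ^+ k) n).
  apply/funext => n; rewrite /series /= mulr_sumr; apply: eq_bigr => k _.
  rewrite (expfzDr _ _ q0) (expfzDr _ _ x0) (mulrC (k%:Z) m) -(exprz_exp q m k) /acoef.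
  exact: fid5.
apply: lim_of; apply: cvgMl_tmp.
exact: Fc_cvg.
Qed.

Lemma tends1 (q y p c : C) : nc q != 1 -> y != 0 -> nc p < 1 ->
  (fun n => Fc q y (c * p ^+ n)) @ \oo --> (1 : C).
Proof.
move=> q1 y0 p1.
have [K HK] := Fc_near0 q1 y0.
have P0 : 0 <= nc p < 1 by rewrite nc_ge0 p1.
have c1 : 0 < nc c + 1 by have := nc_ge0 c; lra.
have sm : forall d, 0 < d -> \forall n \near \oo, nc (c * p ^+ n) < d.
  move=> d d0.
  have [N HN] := eventually_small P0 (divr_gt0 d0 c1).
  exists N => // n /HN hn.
  rewrite ncM ncX.
  have hp : 0 <= nc p ^+ n by rewrite exprn_ge0 ?nc_ge0.
  rewrite ltr_pdivlMr // in hn.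
  have := nc_ge0 c; nra.
apply: cvgC_of => eps he.
have K1 : 0 < `|K| + 1 by have := normr_ge0 K; lra.
near=> n.
have h1 : nc (c * p ^+ n) < 1 by near: n; exact: sm.
have h2 : nc (c * p ^+ n) < eps / (`|K| + 1) by near: n; apply: sm; rewrite divr_gt0.
rewrite ncB; apply: le_lt_trans (HK _ (ltW h1)) _.
move: h1 h2 (nc_ge0 (c * p ^+ n)); set s := nc (c * p ^+ n) => h1 h2 s0.
rewrite ltr_pdivlMr // in h2.
have : K * s <= `|K| * s by rewrite ler_wpM2r // ler_norm.
nra.
Unshelve. all: by end_near. Qed.

Definition wfun (q x : C) z :=
  x^-1 * Fc q x z * Fc q x^-1 (q * z) - x * Fc q x (q * z) * Fc q x^-1 z.

Lemma w_lim (q x p : C) : nc q != 1 -> x != 0 -> nc p < 1 ->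
  (forall z, wfun q x (p * z) = wfun q x z) -> forall z0, wfun q x z0 = x^-1 - x.
Proof.
move=> q1 x0 p1 hw z0.
have xi0 : x^-1 != 0 by rewrite invr_eq0.
have e n : wfun q x (z0 * p ^+ n) = wfun q x z0.
  elim: n => [|n IH]; first by rewrite expr0 mulr1.
  by rewrite exprS mulrCA hw.
symmetry; apply: const_lim.
have <- : (fun n => wfun q x (z0 * p ^+ n)) = (fun _ => wfun q x z0).
  by apply/funext => n; exact: e.
rewrite /wfun.
have -> : x^-1 - x = x^-1 * 1 * 1 - x * 1 * 1 by rewrite !mulr1.
have t1 := tends1 z0 q1 x0 p1.
have t2 := tends1 (q * z0) q1 x0 p1.
have t3 := tends1 z0 q1 xi0 p1.
have t4 := tends1 (q * z0) q1 xi0 p1.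
have t2' : (fun n => Fc q x (q * (z0 * p ^+ n))) @ \oo --> (1 : C).
  by rewrite (_ : (fun n => _) = fun n => Fc q x (q * z0 * p ^+ n)) //; apply/funext => n; rewrite mulrA.
have t4' : (fun n => Fc q x^-1 (q * (z0 * p ^+ n))) @ \oo --> (1 : C).
  by rewrite (_ : (fun n => _) = fun n => Fc q x^-1 (q * z0 * p ^+ n)) //; apply/funext => n; rewrite mulrA.
apply: cvgB.
  exact: (cvgM (@cvgMl_tmp _ _ _ _ _ (x^-1) _ t1) t4').
exact: (cvgM (@cvgMl_tmp _ _ _ _ _ x _ t2') t3).
Qed.

Lemma W_eq (q x : C) m : q != 0 -> x != 0 -> nc q != 1 ->
  Am m x q * Bm (m + 1) x q - Am (m + 1) x q * Bm m x q = wfun q x (q ^ m).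
Proof.
move=> q0 x0 q1.
have xi0 : x^-1 != 0 by rewrite invr_eq0.
rewrite /Bm !Am_eq // (expfzDr _ _ q0) (expfzDr _ _ x0) (expfzDr _ _ xi0) !expr1z.
rewrite -(expfV x m) (mulrC (q ^ m) q) /wfun.
apply: fidW => //; exact: expfz_neq0.
Qed.

End Main.

Unset Implicit Arguments. Set Strict Implicit.

Theorem corollary3p3 (R : realType) (q x : R[i]) (m : int) :
  q != 0 -> `|q| != 1 -> x != 0 ->
  (forall n : int,
      [/\ x != q ^ n, x^-1 != q ^ n, x ^+ 2 != q ^ n & x ^- 2 != q ^ n]) ->
  Cm m x q =
    (x^-1 - x)^-1 * (Am m x q * LBm m x q - Bm m x q * LAm m x q) /\
  Cm (m + 1) x q =
    (x^-1 - x)^-1 * (Am (m + 1) x q * LBm m x q - Bm (m + 1) x q * LAm m x q).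
Proof.
move=> q0 q1' x0 H.
have q1 : nc q != 1.
  by apply: contra q1' => /eqP h; rewrite ncE h.
have xi0 : x^-1 != 0 by rewrite invr_eq0.
have x20 : x ^+ 2 != 0 by rewrite expf_neq0.
have hq n : 1 - q ^+ n.+1 != 0.
  rewrite subr_eq0 eq_sym; apply: contra q1 => /eqP h.
  have : nc (q ^+ n.+1) == 1 by rewrite h nc1.
  by rewrite ncX pexpr_eq1 // nc_ge0.
have hy n : 1 - x ^+ 2 * q ^+ n.+1 != 0.
  rewrite subr_eq0 eq_sym; have [_ _ _ h] := H (n.+1)%:Z.
  apply: contra h => /eqP e; apply/eqP.
  apply: (mulfI x20); rewrite mulfV //; exact: esym e.
have hy' n : 1 - x^-1 ^+ 2 * q ^+ n.+1 != 0.
  rewrite subr_eq0 eq_sym; have [_ _ h _] := H (n.+1)%:Z.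
  apply: contra h => /eqP e; apply/eqP.
  rewrite exprVn in e.
  apply: (mulIf (invr_neq0 x20)); rewrite mulfV // mulrC; exact: esym e.
have wq z : wfun q x (q * z) = wfun q x z.
  have hF := Frec z q1 x0 hq hy.
  have hG := Frec z q1 xi0 hq hy'.
  rewrite (_ : q ^+ 2 * z = q * (q * z)) in hF hG; last by rewrite expr2 mulrA.
  rewrite /wfun; exact: (fidC x0 hF hG).
have wl : wfun q x (q ^ m) = x^-1 - x.
  case: (ltgtP (nc q) 1) (q1) => // hlt _.
    by apply: (w_lim q1 x0 hlt).
  apply: (w_lim (p := q^-1) q1 x0).
    by rewrite ncV invf_lt1 // (lt_trans ltr01 hlt).
  by move=> z; rewrite -[in RHS](mulVKf q0 z) wq.
have d0 : x^-1 - x != 0.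
  have [_ _ h _] := H 0.
  rewrite subr_eq0; apply: contra h => /eqP e.
  by rewrite expr0z expr2 -{1}e mulVf.
apply: fidF d0 _.
by rewrite W_eq.
Qed.
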